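(* Let $K$ be a complete metric space, let $X$ be a (real or complex) Banach space, and let $A$ be a closed subspace of $C_b(K:X)$ such that for every $x\in X$, every $x^*\in X^*$, every $f\in A$ and every integer $m\ge 1$, the function $t\mapsto \big(x^*(f(t))\big)^m x$ belongs to $A$. Then the set $\rho A$ of strong peak points for $A$ is a norming subset of $A$ if and only if the set of all strong peak functions in $A$ is a dense $G_\delta$ subset of $A$.
   Context: $C_b(K:X)$ denotes the Banach space of all bounded continuous functions $K\to X$ with the supremum norm. A nonzero $f\in C_b(K:X)$ is a strong peak function at $t\in K$ if every sequence $\{t_n\}$ in $K$ with $\lim_n\|f(t_n)\|=\|f\|$ converges to $t$. For a subspace $A\subset C_b(K:X)$, a point $t\in K$ is a strong peak point for $A$ if there is a strong peak function $f\in A$ with $\|f\|=\|f(t)\|$; $\rho A$ denotes the set of all strong peak points for $A$. A subset $F\subset K$ is a norming subset for $A$ if $\|f\|=\sup\{\|f(t)\|:t\in F\}$ for every $f\in A$. *)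

(* Defs.v *)
From Stdlib Require Import Reals Lra ClassicalEpsilon.
Set Implicit Arguments.
Open Scope R_scope.

Record Scalar : Type := {
  sc :> Type;
  s0 : sc; s1 : sc;
  sadd : sc -> sc -> sc; smul : sc -> sc -> sc; sopp : sc -> sc;
  sabs : sc -> R }.

Definition RScalar : Scalar :=
  {| sc := R; s0 := 0; s1 := 1; sadd := Rplus; smul := Rmult; sopp := Ropp;
     sabs := Rabs |}.

Definition Cplx : Type := (R * R)%type.
Definition Cadd (z w : Cplx) : Cplx := (fst z + fst w, snd z + snd w).
Definition Cmul (z w : Cplx) : Cplx :=
  (fst z * fst w - snd z * snd w, fst z * snd w + snd z * fst w).
Definition Copp (z : Cplx) : Cplx := (- fst z, - snd z).
Definition Cabs (z : Cplx) : R := sqrt (fst z ^ 2 + snd z ^ 2).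

Definition CScalar : Scalar :=
  {| sc := Cplx; s0 := (0, 0); s1 := (1, 0); sadd := Cadd; smul := Cmul;
     sopp := Copp; sabs := Cabs |}.

Inductive scalar_field := RealField | ComplexField.

Definition scalars (k : scalar_field) : Scalar :=
  match k with RealField => RScalar | ComplexField => CScalar end.

Fixpoint spow {F : Scalar} (a : F) (m : nat) : F :=
  match m with O => s1 F | Datatypes.S m' => smul F (@spow F a m') a end.

Record NormedSpace (F : Scalar) : Type := {
  vec :> Type;
  vzero : vec;
  vadd : vec -> vec -> vec;
  vopp : vec -> vec;
  vscal : F -> vec -> vec;
  vnorm : vec -> R;
  vadd_assoc : forall x y z, vadd x (vadd y z) = vadd (vadd x y) z;
  vadd_comm : forall x y, vadd x y = vadd y x;
  vadd_0 : forall x, vadd x vzero = x;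
  vadd_opp : forall x, vadd x (vopp x) = vzero;
  vscal_assoc : forall a b x, vscal a (vscal b x) = vscal (smul F a b) x;
  vscal_1 : forall x, vscal (s1 F) x = x;
  vscal_distr_v : forall a x y, vscal a (vadd x y) = vadd (vscal a x) (vscal a y);
  vscal_distr_s : forall a b x, vscal (sadd F a b) x = vadd (vscal a x) (vscal b x);
  vnorm_eq0 : forall x, vnorm x = 0 <-> x = vzero;
  vnorm_scal : forall a x, vnorm (vscal a x) = sabs F a * vnorm x;
  vnorm_triangle : forall x y, vnorm (vadd x y) <= vnorm x + vnorm y }.

Arguments vzero {F} n.
Arguments vadd {F} n _ _.
Arguments vopp {F} n _.
Arguments vscal {F} n _ _.
Arguments vnorm {F} n _.

Definition vsub (F : Scalar) (X : NormedSpace F) (x y : X) : X := vadd X x (vopp X y).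

Definition Banach (F : Scalar) (X : NormedSpace F) : Prop :=
  forall u : nat -> X,
    (forall eps, eps > 0 -> exists N, forall n m, (n >= N)%nat -> (m >= N)%nat ->
        vnorm X (vsub X (u n) (u m)) < eps) ->
    exists l : X, forall eps, eps > 0 -> exists N, forall n, (n >= N)%nat ->
        vnorm X (vsub X (u n) l) < eps.

Definition is_dual (F : Scalar) (X : NormedSpace F) (phi : X -> F) : Prop :=
  (forall x y, phi (vadd X x y) = sadd F (phi x) (phi y)) /\
  (forall a x, phi (vscal X a x) = smul F a (phi x)) /\
  (exists M, forall x, sabs F (phi x) <= M * vnorm X x).

Record MetricSpace : Type := {
  pt :> Type;
  mdist : pt -> pt -> R;
  dist_eq0 : forall x y, mdist x y = 0 <-> x = y;
  dist_sym : forall x y, mdist x y = mdist y x;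
  dist_tri : forall x y z, mdist x z <= mdist x y + mdist y z }.
Arguments mdist m _ _ : clear implicits.

Definition seq_conv (K : MetricSpace) (u : nat -> K) (l : K) : Prop :=
  forall eps, eps > 0 -> exists N, forall n, (n >= N)%nat -> mdist K (u n) l < eps.

Arguments seq_conv {K} u l.

Definition complete_metric (K : MetricSpace) : Prop :=
  forall u : nat -> K,
    (forall eps, eps > 0 -> exists N, forall n m, (n >= N)%nat -> (m >= N)%nat ->
        mdist K (u n) (u m) < eps) ->
    exists l, seq_conv u l.

Section Cb.
Variables (F : Scalar) (K : MetricSpace) (X : NormedSpace F).

Definition fcont (f : K -> X) : Prop :=
  forall t eps, eps > 0 -> exists delta, delta > 0 /\
    forall s, mdist K s t < delta -> vnorm X (vsub X (f s) (f t)) < eps.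

Definition fbounded (f : K -> X) : Prop := exists M, forall t, vnorm X (f t) <= M.

Definition in_Cb (f : K -> X) : Prop := fcont f /\ fbounded f.

Definition fzero : K -> X := fun _ => vzero X.
Definition fadd (f g : K -> X) : K -> X := fun t => vadd X (f t) (g t).
Definition fscal (a : F) (f : K -> X) : K -> X := fun t => vscal X a (f t).
Definition fsub (f g : K -> X) : K -> X := fun t => vsub X (f t) (g t).

(** supremum norm (meaningful for bounded f; sup over {0} ∪ {||f t||}
    so that it is 0 when K is empty) *)
Definition sup_norm (f : K -> X) : R :=
  epsilon (inhabits 0) (is_lub (fun r => r = 0 \/ exists t, r = vnorm X (f t))).

Definition closed_subspace (A : (K -> X) -> Prop) : Prop :=
  (forall f, A f -> in_Cb f) /\
  A fzero /\
  (forall f g, A f -> A g -> A (fadd f g)) /\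
  (forall a f, A f -> A (fscal a f)) /\
  (forall (u : nat -> K -> X) (f : K -> X), (forall n, A (u n)) ->
     (forall eps, eps > 0 -> exists N, forall n t, (n >= N)%nat ->
        vnorm X (vsub X (u n t) (f t)) <= eps) ->
     A f).

Definition strong_peak_at (f : K -> X) (t : K) : Prop :=
  in_Cb f /\ (exists s, f s <> vzero X) /\
  forall u : nat -> K, Un_cv (fun n => vnorm X (f (u n))) (sup_norm f) -> seq_conv u t.

Definition strong_peak_fun (f : K -> X) : Prop := exists t, strong_peak_at f t.

Definition rho (A : (K -> X) -> Prop) (t : K) : Prop :=
  exists f, A f /\ strong_peak_at f t /\ vnorm X (f t) = sup_norm f.

(** norming subset (sup over F; the sup over an empty set does not exist) *)
Definition norming (Fs : K -> Prop) (A : (K -> X) -> Prop) : Prop :=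
  forall f, A f -> is_lub (fun r => exists t, Fs t /\ r = vnorm X (f t)) (sup_norm f).

Definition peak_funs (A : (K -> X) -> Prop) (f : K -> X) : Prop :=
  A f /\ strong_peak_fun f.

Definition dense_in (D A : (K -> X) -> Prop) : Prop :=
  (forall f, D f -> A f) /\
  forall f, A f -> forall eps, eps > 0 -> exists g, D g /\ sup_norm (fsub f g) < eps.

Definition open_in (U A : (K -> X) -> Prop) : Prop :=
  forall f, A f -> U f -> exists eps, eps > 0 /\
    forall g, A g -> sup_norm (fsub g f) < eps -> U g.

Definition Gdelta_in (D A : (K -> X) -> Prop) : Prop :=
  (forall f, D f -> A f) /\
  exists U : nat -> (K -> X) -> Prop,
    (forall n, open_in (U n) A) /\ forall f, A f -> (D f <-> forall n, U n f).

End Cb.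

Arguments fcont {F K X} f.
Arguments fbounded {F K X} f.
Arguments in_Cb {F K X} f.
Arguments fzero {F K X} _.
Arguments fadd {F K X} f g _.
Arguments fscal {F K X} a f _.
Arguments fsub {F K X} f g _.
Arguments sup_norm {F K X} f.
Arguments closed_subspace {F K X} A.
Arguments strong_peak_at {F K X} f t.
Arguments strong_peak_fun {F K X} f.
Arguments rho {F K X} A t.
Arguments norming {F K X} Fs A.
Arguments peak_funs {F K X} A f.
Arguments dense_in {F K X} D A.
Arguments open_in {F K X} U A.
Arguments Gdelta_in {F K X} D A.
Arguments Banach {F} X.
Arguments is_dual {F} X phi.

(* Main.v *)
Require Import Defs.
From Stdlib Require Import Reals Lra Lia ClassicalEpsilon Classical FunctionalExtensionality PropExtensionality.
Open Scope R_scope.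


Section Zorn.
Variables (T : Type) (P : T -> Prop) (le : T -> T -> Prop).
Hypothesis le_refl : forall x, le x x.
Hypothesis le_trans : forall x y z, le x y -> le y z -> le x z.
Hypothesis chain_ub : forall C : T -> Prop, (forall x, C x -> P x) ->
  (forall x y, C x -> C y -> le x y \/ le y x) -> exists m, P m /\ forall x, C x -> le x m.

Definition zincl (A B : T -> Prop) := forall x, A x -> B x.
Definition zchain (C : T -> Prop) := (forall x, C x -> P x) /\ (forall x y, C x -> C y -> le x y \/ le y x).
Definition zsub (C : T -> Prop) (x : T) := P x /\ forall c, C c -> le c x /\ ~ le x c.

Definition zg (C : T -> Prop) : T -> Prop :=
  match excluded_middle_informative (exists x, zchain C /\ zsub C x) with
  | left H => let x := proj1_sig (constructive_indefinite_description _ H) in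
              fun z => C z \/ z = x
  | right _ => C end.

Lemma zg_infl C : zincl C (zg C).
Proof. unfold zg, zincl; intros x Hx. destruct excluded_middle_informative; auto. Qed.

Definition zU (S : (T -> Prop) -> Prop) : T -> Prop := fun x => exists C, S C /\ C x.

Inductive tower : (T -> Prop) -> Prop :=
| tw_g : forall C, tower C -> tower (zg C)
| tw_U : forall S, (forall C, S C -> tower C) -> tower (zU S).

Lemma zext A B : zincl A B -> zincl B A -> A = B.
Proof. intros H1 H2; apply functional_extensionality; intro x; apply propositional_extensionality; split; auto. Qed.

Definition extreme c := forall x, tower x -> zincl x c -> ~ zincl c x -> zincl (zg x) c.

Lemma lemma1 c : extreme c -> forall x, tower x -> zincl x c \/ zincl (zg c) x.
Proof.
  intros Hc x Hx; induction Hx as [x0 Hx0 IH | S HS IH].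
  - destruct IH as [H|H].
    + destruct (classic (zincl c x0)) as [H'|H'].
      * right. rewrite (zext _ _ H H'). intros z; auto.
      * left. apply Hc; auto.
    + right. intros z Hz. apply zg_infl. auto.
  - destruct (classic (forall C, S C -> zincl C c)) as [H|H].
    + left. intros z [C [H1 H2]]. exact (H C H1 z H2).
    + right. apply not_all_ex_not in H. destruct H as [C H].
      apply imply_to_and in H. destruct H as [H1 H2].
      destruct (IH C H1) as [H3|H3]; [contradiction|].
      intros z Hz. exists C; auto.
Qed.

Lemma lemma2 c : tower c -> extreme c.
Proof.
  intros Hc; induction Hc as [c0 Hc0 IH | S HS IH].
  - intros x Hx H1 H2.
    destruct (lemma1 c0 IH x Hx) as [H|H]; [|contradiction].
    destruct (classic (zincl c0 x)) as [H'|H'].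
    + rewrite (zext _ _ H H'). intros z; auto.
    + intros z Hz. apply zg_infl. exact (IH x Hx H H' z Hz).
  - intros x Hx H1 H2.
    assert (exists C, S C /\ ~ zincl (zg C) x) as [C [HC1 HC2]].
    { apply NNPP; intro Hn. apply H2. intros z [C [HC Hz]].
      apply NNPP; intro Hz'. apply Hn. exists C; split; auto.
      intro Hi. apply Hz'. apply Hi. apply zg_infl. auto. }
    destruct (lemma1 C (IH C HC1) x Hx) as [H|H]; [|contradiction].
    destruct (classic (zincl C x)) as [H'|H'].
    + assert (x = C) by (apply zext; auto). subst x.
      apply not_all_ex_not in H2. destruct H2 as [z Hz].
      apply imply_to_and in Hz. destruct Hz as [[C' [HC' Hz1]] Hz2].
      destruct (lemma1 C (IH C HC1) C' (HS C' HC')) as [H3|H3].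
      * exfalso; auto.
      * intros w Hw. exists C'; auto.
    + intros z Hz. exists C. split; auto. apply (IH C HC1 x Hx H H'); auto.
Qed.

Lemma tower_comp x c : tower x -> tower c -> zincl x c \/ zincl c x.
Proof.
  intros Hx Hc. destruct (lemma1 c (lemma2 c Hc) x Hx); auto.
  right. intros z Hz. apply H. apply zg_infl; auto.
Qed.

Lemma tower_chain C : tower C -> zchain C.
Proof.
  intros H; induction H as [C HC IH | S HS IH].
  - unfold zg. destruct excluded_middle_informative as [Hex|]; auto.
    destruct (constructive_indefinite_description _ Hex) as [x [Hch Hsub]]; simpl.
    split.
    + intros z [Hz|Hz]; [apply IH; auto| subst; apply Hsub].
    + intros a b [Ha|Ha] [Hb|Hb]; subst.
      * apply IH; auto.
      * left; apply Hsub; auto.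
      * right; apply Hsub; auto.
      * left; auto.
  - split.
    + intros z [C [H1 H2]]. apply (IH C H1); auto.
    + intros a b [C1 [H1 Ha]] [C2 [H2 Hb]].
      destruct (tower_comp C1 C2 (HS _ H1) (HS _ H2)) as [H|H].
      * apply (IH C2 H2); auto.
      * apply (IH C1 H1); auto.
Qed.

Theorem zorn : exists m, P m /\ forall x, P x -> le m x -> le x m.
Proof.
  set (Ts := zU tower).
  assert (HT : tower Ts) by (apply tw_U; auto).
  destruct (tower_chain Ts HT) as [HP Hc].
  destruct (chain_ub Ts HP Hc) as [m [Hm Hub]].
  exists m; split; auto. intros x Hx Hmx. apply NNPP; intro Hxm.
  assert (Hs : zsub Ts x).
  { split; auto. intros c Hc'. split. apply le_trans with m; auto.
    intro Hxc. apply Hxm. apply le_trans with c; auto. }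
  assert (Hin : zincl (zg Ts) Ts).
  { intros z Hz. exists (zg Ts); split; auto. apply tw_g; auto. }
  revert Hin. unfold zg. destruct excluded_middle_informative as [Hex|Hn].
  - destruct (constructive_indefinite_description _ Hex) as [y [Hch Hsub]]; simpl.
    intro Hin. assert (Ts y) by (apply Hin; auto). destruct Hsub as [_ Hsub].
    apply (proj2 (Hsub y H)). auto.
  - intros _. apply Hn. exists x; split; auto. split; auto.
Qed.
End Zorn.


Definition Inf (E : R -> Prop) : R :=
  - epsilon (inhabits 0) (is_lub (fun r => E (- r))).

Lemma Inf_spec (E : R -> Prop) : (exists e, E e) -> (exists b, forall e, E e -> b <= e) ->
  (forall e, E e -> Inf E <= e) /\ (forall b, (forall e, E e -> b <= e) -> b <= Inf E).
Proof.
  intros [e He] [b Hb].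
  assert (Hl : exists m, is_lub (fun r => E (- r)) m).
  { destruct (completeness (fun r => E (- r))) as [m Hm].
    - exists (- b). intros r Hr. specialize (Hb _ Hr). lra.
    - exists (- e). rewrite Ropp_involutive. auto.
    - exists m; auto. }
  pose proof (epsilon_spec (inhabits 0) _ Hl) as [H1 H2].
  unfold Inf. split.
  - intros e' He'. assert (E (- - e')) by (rewrite Ropp_involutive; auto).
    specialize (H1 _ H). lra.
  - intros b' Hb'. assert (is_upper_bound (fun r => E (- r)) (- b')).
    { intros r Hr. specialize (Hb' _ Hr). lra. }
    specialize (H2 _ H). lra.
Qed.

Definition infam {I : Type} (S : I -> Prop) (F : I -> R) : R :=
  Inf (fun v => exists i, S i /\ v = F i).

Lemma infam_le {I} (S : I -> Prop) F i b : S i -> (forall j, S j -> b <= F j) -> infam S F <= F i.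
Proof.
  intros Hi Hb. unfold infam. apply (Inf_spec _ (ex_intro _ (F i) (ex_intro _ i (conj Hi eq_refl)))).
  - exists b. intros e [j [Hj ->]]; auto.
  - exists i; auto.
Qed.

Lemma infam_ge {I} (S : I -> Prop) F i b : S i -> (forall j, S j -> b <= F j) -> b <= infam S F.
Proof.
  intros Hi Hb. unfold infam. apply (Inf_spec _ (ex_intro _ (F i) (ex_intro _ i (conj Hi eq_refl)))).
  - exists b. intros e [j [Hj ->]]; auto.
  - intros e [j [Hj ->]]; auto.
Qed.

Section HB.
Variables (V : Type) (vz : V) (va : V -> V -> V) (vo : V -> V) (vs : R -> V -> V) (p : V -> R).
Hypothesis va_assoc : forall x y z, va x (va y z) = va (va x y) z.
Hypothesis va_comm : forall x y, va x y = va y x.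
Hypothesis va_0 : forall x, va x vz = x.
Hypothesis va_opp : forall x, va x (vo x) = vz.
Hypothesis vs_assoc : forall a b x, vs a (vs b x) = vs (a * b) x.
Hypothesis vs_1 : forall x, vs 1 x = x.
Hypothesis vs_dv : forall a x y, vs a (va x y) = va (vs a x) (vs a y).
Hypothesis vs_ds : forall a b x, vs (a + b) x = va (vs a x) (vs b x).
Hypothesis p_tri : forall x y, p (va x y) <= p x + p y.
Hypothesis p_scal : forall r x, p (vs r x) = Rabs r * p x.

Lemma va_cancel x y z : va x y = va x z -> y = z.
Proof.
  intros H. assert (va (vo x) (va x y) = va (vo x) (va x z)) by (rewrite H; auto).
  rewrite !va_assoc, (va_comm (vo x) x), va_opp, !(va_comm vz), !va_0 in H0. auto.
Qed.

Lemma vs_0 x : vs 0 x = vz.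
Proof.
  apply (va_cancel (vs 0 x)). rewrite va_0, <- vs_ds, Rplus_0_r. auto.
Qed.

Lemma vs_z r : vs r vz = vz.
Proof.
  rewrite <- (vs_0 vz), vs_assoc, Rmult_0_r. auto.
Qed.

Lemma vo_scal x : vo x = vs (-1) x.
Proof.
  apply (va_cancel x). rewrite va_opp.
  transitivity (va (vs 1 x) (vs (-1) x)); [|rewrite vs_1; auto].
  rewrite <- vs_ds. replace (1 + -1) with 0 by ring. rewrite vs_0; auto.
Qed.

Lemma p_0 : p vz = 0.
Proof. rewrite <- (vs_0 vz), p_scal, Rabs_R0. ring. Qed.

Lemma p_opp x : p (vo x) = p x.
Proof. assert (Rabs (-1) = 1) by (unfold Rabs; destruct Rcase_abs; lra).
  rewrite vo_scal, p_scal, H; ring. Qed.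

Lemma p_nonneg x : 0 <= p x.
Proof. pose proof (p_tri x (vo x)). rewrite va_opp, p_0, p_opp in H. lra. Qed.

Lemma V1 x x' t t' z : va (va x x') (vs (t + t') z) = va (va x (vs t z)) (va x' (vs t' z)).
Proof.
  rewrite vs_ds. rewrite !va_assoc. f_equal. rewrite <- !va_assoc. f_equal. apply va_comm.
Qed.

Lemma V2 r x t z : va (vs r x) (vs (r * t) z) = vs r (va x (vs t z)).
Proof. rewrite vs_dv, vs_assoc. auto. Qed.

Lemma V3 x z : va x (vs 0 z) = x.
Proof. rewrite vs_0, va_0; auto. Qed.

Lemma V5 x t z : vs t z = va (va x (vs t z)) (vo x).
Proof. rewrite (va_comm x), <- va_assoc, va_opp, va_0. auto. Qed.

Lemma V6 t z : t <> 0 -> vs (/ t) (vs t z) = z.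
Proof. intros. rewrite vs_assoc, Rinv_l; auto. Qed.

Definition sublin (q : V -> R) :=
  (forall x x', q (va x x') <= q x + q x') /\ (forall r x, r > 0 -> q (vs r x) <= r * q x).

Lemma sublin_z q : sublin q -> q vz = 0.
Proof.
  intros [_ H]. pose proof (H 2 vz ltac:(lra)). pose proof (H (/2) vz ltac:(lra)).
  rewrite vs_z in H0, H1. lra.
Qed.

Lemma sublin_hom q t z : sublin q -> 0 <= t -> q (vs t z) = t * q z.
Proof.
  intros Hq Ht. destruct (Req_dec t 0) as [->|Hne].
  - rewrite vs_0, sublin_z; auto; ring.
  - pose proof (proj2 Hq t z ltac:(lra)).
    pose proof (proj2 Hq (/ t) (vs t z) ltac:(apply Rinv_0_lt_compat; lra)).
    rewrite V6 in H0; auto.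
    apply Rmult_le_compat_l with (r := t) in H0; [|lra].
    rewrite <- Rmult_assoc, Rinv_r in H0; lra.
Qed.

Lemma sublin_lower q x : sublin q -> - q (vo x) <= q x.
Proof.
  intros Hq. pose proof (proj1 Hq x (vo x)). rewrite va_opp, sublin_z in H; auto. lra.
Qed.

Variable y : V.

Definition q0 (x : V) : R := infam (fun _ : R => True) (fun t => p (va x (vs t y)) - t * p y).

Lemma q0_lb x t : - p x <= p (va x (vs t y)) - t * p y.
Proof.
  pose proof (p_tri (va x (vs t y)) (vo x)). rewrite <- V5, p_opp, p_scal in H.
  pose proof (p_nonneg y). pose proof (Rle_abs t).
  assert (t * p y <= Rabs t * p y) by (apply Rmult_le_compat_r; auto). lra.
Qed.

Lemma q0_le x t : q0 x <= p (va x (vs t y)) - t * p y.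
Proof. apply (infam_le (fun _ => True) (fun t => p (va x (vs t y)) - t * p y) t (- p x)); auto. intros; apply q0_lb. Qed.

Lemma q0_ge x b : (forall t, b <= p (va x (vs t y)) - t * p y) -> b <= q0 x.
Proof. intros. apply (infam_ge (fun _ => True) (fun t => p (va x (vs t y)) - t * p y) 0 b); auto. Qed.

Lemma q0_sublin : sublin q0.
Proof.
  split.
  - intros x x'.
    assert (forall t t', q0 (va x x') - (p (va x' (vs t' y)) - t' * p y) <= p (va x (vs t y)) - t * p y).
    { intros t t'. pose proof (q0_le (va x x') (t + t')). rewrite V1 in H.
      pose proof (p_tri (va x (vs t y)) (va x' (vs t' y))). lra. }
    assert (forall t', q0 (va x x') - q0 x <= p (va x' (vs t' y)) - t' * p y).
    { intros t'. assert (q0 (va x x') - (p (va x' (vs t' y)) - t' * p y) <= q0 x).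
      { apply q0_ge. intros; apply H. } lra. }
    assert (q0 (va x x') - q0 x <= q0 x') by (apply q0_ge; auto). lra.
  - intros r x Hr.
    assert (forall t, q0 (vs r x) / r <= p (va x (vs t y)) - t * p y).
    { intros t. pose proof (q0_le (vs r x) (r * t)). rewrite V2, p_scal, Rabs_pos_eq in H by lra.
      apply (Rmult_le_reg_l r); auto. field_simplify; lra. }
    assert (q0 (vs r x) / r <= q0 x) by (apply q0_ge; auto).
    apply (Rmult_le_compat_l r) in H0; [|lra]. field_simplify in H0; lra.
Qed.

Definition HP (q : V -> R) := sublin q /\ forall x, q x <= q0 x.
Definition Hle (q1 q2 : V -> R) := forall x, q2 x <= q1 x.

Lemma HB_chain : forall C : (V -> R) -> Prop, (forall x, C x -> HP x) ->
  (forall x y, C x -> C y -> Hle x y \/ Hle y x) -> exists m, HP m /\ forall x, C x -> Hle x m.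
Proof.
  intros C HC Hc. destruct (classic (exists q, C q)) as [[q1 Hq1]|Hn].
  - set (m := fun x => infam C (fun q => q x)).
    assert (Hlb : forall q x, C q -> - q0 (vo x) <= q x).
    { intros q x Hq. destruct (HC q Hq) as [Hs Hl]. pose proof (sublin_lower q x Hs).
      pose proof (Hl (vo x)). lra. }
    assert (Hm1 : forall q x, C q -> m x <= q x).
    { intros q x H. exact (infam_le C (fun q => q x) q (- q0 (vo x)) H (fun j Hj => Hlb j x Hj)). }
    assert (Hm2 : forall b x, (forall q, C q -> b <= q x) -> b <= m x).
    { intros. apply (infam_ge C (fun q => q x) q1 b); auto. }
    exists m. split; [split; [split|]|].
    + intros x x'.
      assert (forall q q', C q -> C q' -> m (va x x') <= q x + q' x').
      { intros q q' Hq Hq'. destruct (Hc q q' Hq Hq') as [H|H].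
        - pose proof (Hm1 q' (va x x') Hq'). pose proof (proj1 (proj1 (HC q' Hq')) x x').
          pose proof (H x). lra.
        - pose proof (Hm1 q (va x x') Hq). pose proof (proj1 (proj1 (HC q Hq)) x x').
          pose proof (H x'). lra. }
      assert (forall q', C q' -> m (va x x') - q' x' <= m x).
      { intros q' Hq'. apply Hm2. intros q Hq. specialize (H q q' Hq Hq'). lra. }
      assert (m (va x x') - m x <= m x').
      { apply Hm2. intros q' Hq'. specialize (H0 q' Hq'). lra. } lra.
    + intros r x Hr.
      assert (m (vs r x) / r <= m x).
      { apply Hm2. intros q Hq. pose proof (Hm1 q (vs r x) Hq).
        pose proof (proj2 (proj1 (HC q Hq)) r x Hr).
        apply (Rmult_le_reg_l r); auto. field_simplify; lra. }
      apply (Rmult_le_compat_l r) in H; [|lra]. field_simplify in H; lra.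
    + intros x. pose proof (Hm1 q1 x Hq1). pose proof (proj2 (HC q1 Hq1) x). lra.
    + intros q Hq x. apply Hm1; auto.
  - exists q0. split. split. apply q0_sublin. intros; lra.
    intros x Hx. exfalso; apply Hn; eauto.
Qed.

Theorem HB_real : exists u : V -> R,
  (forall x x', u (va x x') = u x + u x') /\ (forall r x, u (vs r x) = r * u x) /\
  (forall x, Rabs (u x) <= p x) /\ u y = p y.
Proof.
  destruct (zorn (V -> R) HP Hle) as [q [[Hq Hq0] Hmax]].
  - intros x z; lra.
  - intros a b c H1 H2 x. specialize (H1 x). specialize (H2 x). lra.
  - apply HB_chain.
  - assert (Hadd : forall x z, q x + q z <= q (va x z)).
    { intros x z.
      set (q' := fun x => infam (fun t => 0 <= t) (fun t => q (va x (vs t z)) - t * q z)).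
      assert (Hlb : forall x t, 0 <= t -> - q (vo x) <= q (va x (vs t z)) - t * q z).
      { intros x' t Ht. pose proof (proj1 Hq (va x' (vs t z)) (vo x')). rewrite <- V5 in H.
        rewrite sublin_hom in H; auto. lra. }
      assert (Hq1 : forall x t, 0 <= t -> q' x <= q (va x (vs t z)) - t * q z).
      { intros x0 t Ht. exact (infam_le (fun t => 0 <= t) (fun t => q (va x0 (vs t z)) - t * q z) t (- q (vo x0)) Ht (fun j Hj => Hlb x0 j Hj)). }
      assert (Hq2 : forall x b, (forall t, 0 <= t -> b <= q (va x (vs t z)) - t * q z) -> b <= q' x).
      { intros. apply (infam_ge (fun t => 0 <= t) (fun t => q (va x0 (vs t z)) - t * q z) 0 b); auto. lra. }
      assert (Hs : sublin q').
      { split.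
        - intros a a'.
          assert (forall t t', 0 <= t -> 0 <= t' ->
            q' (va a a') - (q (va a' (vs t' z)) - t' * q z) <= q (va a (vs t z)) - t * q z).
          { intros t t' Ht Ht'. pose proof (Hq1 (va a a') (t + t') ltac:(lra)). rewrite V1 in H.
            pose proof (proj1 Hq (va a (vs t z)) (va a' (vs t' z))). lra. }
          assert (forall t', 0 <= t' -> q' (va a a') - q' a <= q (va a' (vs t' z)) - t' * q z).
          { intros t' Ht'. assert (q' (va a a') - (q (va a' (vs t' z)) - t' * q z) <= q' a).
            { apply Hq2. intros; apply H; auto. } lra. }
          assert (q' (va a a') - q' a <= q' a') by (apply Hq2; auto). lra.
        - intros r a Hr.
          assert (q' (vs r a) / r <= q' a).
          { apply Hq2. intros t Ht. pose proof (Hq1 (vs r a) (r * t) ltac:(nra)).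
            rewrite V2 in H. pose proof (proj2 Hq r (va a (vs t z)) Hr).
            apply (Rmult_le_reg_l r); auto. field_simplify; lra. }
          apply (Rmult_le_compat_l r) in H; [|lra]. field_simplify in H; lra. }
      assert (Hle' : forall x, q' x <= q x).
      { intros a. pose proof (Hq1 a 0 ltac:(lra)). rewrite V3 in H. lra. }
      assert (HPq' : HP q') by (split; auto; intros a; pose proof (Hle' a); pose proof (Hq0 a); lra).
      pose proof (Hmax q' HPq' Hle' x). pose proof (Hq1 x 1 ltac:(lra)). rewrite vs_1 in H0. lra. }
    assert (Hadd' : forall x z, q (va x z) = q x + q z).
    { intros. pose proof (Hadd x z). pose proof (proj1 Hq x z). lra. }
    assert (Hneg : forall x, q (vo x) = - q x).
    { intros. pose proof (Hadd' x (vo x)). rewrite va_opp, sublin_z in H; auto. lra. }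
    assert (Hhom : forall r x, q (vs r x) = r * q x).
    { intros r x. destruct (Rle_dec 0 r). apply sublin_hom; auto.
      assert (vs r x = vo (vs (- r) x)) by (rewrite vo_scal, vs_assoc; f_equal; ring).
      rewrite H, Hneg, sublin_hom; auto; [ring|lra]. }
    assert (Hp : forall x, q x <= p x).
    { intros. pose proof (Hq0 x). pose proof (q0_le x 0). rewrite V3 in H0. lra. }
    exists q. split; [|split; [|split]]; auto.
    + intros x. apply Rabs_le. pose proof (Hp x). pose proof (Hp (vo x)). rewrite Hneg, p_opp in H0. lra.
    + pose proof (Hq0 (vs (-1) y)). pose proof (q0_le (vs (-1) y) 1).
      rewrite <- vs_ds in H0. replace (-1 + 1) with 0 in H0 by ring.
      rewrite vs_0, p_0 in H0. rewrite Hhom in H. pose proof (Hp y). lra.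
Qed.
End HB.


Definition emb (k : scalar_field) (r : R) : scalars k :=
  match k as k0 return sc (scalars k0) with RealField => r | ComplexField => (r, 0) end.

Lemma pair_eq (a b c d : R) : a = c -> b = d -> (a, b) = (c, d).
Proof. intros -> ->; auto. Qed.

Lemma Cabs_nonneg z : 0 <= Cabs z.
Proof. apply sqrt_pos. Qed.

Lemma sabs_nonneg k (a : scalars k) : 0 <= sabs _ a.
Proof. destruct k; simpl in *. apply Rabs_pos. apply Cabs_nonneg. Qed.

Lemma sabs_mul k (a b : scalars k) : sabs _ (smul _ a b) = sabs _ a * sabs _ b.
Proof.
  destruct k; simpl in *. apply Rabs_mult.
  destruct a as [a1 a2], b as [b1 b2]; unfold Cabs, Cmul; simpl.
  rewrite <- sqrt_mult by nra. f_equal. ring.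
Qed.

Lemma sabs_emb k r : sabs _ (emb k r) = Rabs r.
Proof.
  destruct k; simpl; auto. unfold Cabs; simpl.
  rewrite <- sqrt_Rsqr_abs. f_equal. unfold Rsqr; ring.
Qed.

Lemma smul_emb k r s : smul _ (emb k r) (emb k s) = emb k (r * s).
Proof. destruct k; simpl; auto. unfold Cmul; simpl. apply pair_eq; ring. Qed.

Lemma sadd_emb k r s : sadd _ (emb k r) (emb k s) = emb k (r + s).
Proof. destruct k; simpl; auto. unfold Cadd; simpl. apply pair_eq; ring. Qed.

Lemma emb1 k : emb k 1 = s1 _.
Proof. destruct k; simpl; auto. Qed.

Lemma smul_s1 k (a : scalars k) : smul _ a (s1 _) = a.
Proof. destruct k; simpl in *. ring. destruct a; unfold Cmul; simpl; apply pair_eq; ring. Qed.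

Lemma spow_s1 k m : @spow (scalars k) (s1 _) m = s1 _.
Proof. induction m; simpl; auto. rewrite IHm. apply smul_s1. Qed.

Lemma sabs_spow k (a : scalars k) m : sabs _ (spow a m) = sabs _ a ^ m.
Proof.
  induction m; simpl. rewrite <- emb1, sabs_emb, Rabs_R1; auto.
  rewrite sabs_mul, IHm; ring.
Qed.

Lemma smul_add_r k (a b c : scalars k) : smul _ a (sadd _ b c) = sadd _ (smul _ a b) (smul _ a c).
Proof. destruct k; simpl in *. ring. destruct a, b, c; unfold Cmul, Cadd; simpl; apply pair_eq; ring. Qed.

Lemma smul_swap k (a b c : scalars k) : smul _ a (smul _ b c) = smul _ b (smul _ a c).
Proof. destruct k; simpl in *. ring. destruct a, b, c; unfold Cmul; simpl; apply pair_eq; ring. Qed.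

Section XV.
Variable k : scalar_field.
Variable X : NormedSpace (scalars k).

Definition rvs (r : R) (x : X) : X := vscal X (emb k r) x.

Lemma rvs_assoc a b x : rvs a (rvs b x) = rvs (a * b) x.
Proof. unfold rvs. rewrite vscal_assoc, smul_emb; auto. Qed.
Lemma rvs_1 x : rvs 1 x = x.
Proof. unfold rvs. rewrite emb1, vscal_1; auto. Qed.
Lemma rvs_dv a x y : rvs a (vadd X x y) = vadd X (rvs a x) (rvs a y).
Proof. unfold rvs. apply vscal_distr_v. Qed.
Lemma rvs_ds a b x : rvs (a + b) x = vadd X (rvs a x) (rvs b x).
Proof. unfold rvs. rewrite <- sadd_emb. apply vscal_distr_s. Qed.
Lemma rvs_p r x : vnorm X (rvs r x) = Rabs r * vnorm X x.
Proof. unfold rvs. rewrite vnorm_scal, sabs_emb; auto. Qed.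

Ltac hbi L := eapply L; intros; first [apply vadd_assoc | apply vadd_comm | apply vadd_0 | apply vadd_opp
  | apply rvs_assoc | apply rvs_1 | apply rvs_dv | apply rvs_ds | apply vnorm_triangle | apply rvs_p].

Lemma vn_nonneg x : 0 <= vnorm X x.
Proof. hbi p_nonneg. Qed.
Lemma vn_opp x : vnorm X (vopp X x) = vnorm X x.
Proof. hbi p_opp. Qed.
Lemma vcancel x y z : vadd X x y = vadd X x z -> y = z.
Proof. hbi va_cancel. Qed.
Lemma vopp_rvs x : vopp X x = rvs (-1) x.
Proof. hbi vo_scal. Qed.
Lemma rvs_0 x : rvs 0 x = vzero X.
Proof. hbi vs_0. Qed.
Lemma vn_zero : vnorm X (vzero X) = 0.
Proof. apply vnorm_eq0; auto. Qed.

Lemma vopp_add x y : vopp X (vadd X x y) = vadd X (vopp X x) (vopp X y).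
Proof. rewrite !vopp_rvs. apply rvs_dv. Qed.

Lemma vadd_0l x : vadd X (vzero X) x = x.
Proof. rewrite vadd_comm, vadd_0; auto. Qed.

Lemma vsub_add x w : vsub X x (vadd X x w) = vopp X w.
Proof.
  unfold vsub. rewrite vopp_add, vadd_assoc, vadd_opp, vadd_0l; auto.
Qed.

Lemma vsub_tri x y z : vsub X x z = vadd X (vsub X x y) (vsub X y z).
Proof.
  unfold vsub. rewrite <- (vadd_assoc X x (vopp X y)), (vadd_assoc X (vopp X y) y).
  rewrite (vadd_comm X (vopp X y) y), vadd_opp, vadd_0l. auto.
Qed.

Lemma vsub_sym x y : vnorm X (vsub X x y) = vnorm X (vsub X y x).
Proof.
  rewrite <- vn_opp. unfold vsub. rewrite vopp_add.
  rewrite (vopp_rvs (vopp X y)), (vopp_rvs y), rvs_assoc. replace (-1 * -1) with 1 by ring.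
  rewrite rvs_1, vadd_comm. auto.
Qed.

Lemma vn_tri_sub x y z : vnorm X (vsub X x z) <= vnorm X (vsub X x y) + vnorm X (vsub X y z).
Proof. rewrite (vsub_tri x y z). apply vnorm_triangle. Qed.

Lemma rvs_z r : rvs r (vzero X) = vzero X.
Proof. hbi vs_z. Qed.

Lemma vsub_0 x : vsub X x (vzero X) = x.
Proof. unfold vsub. rewrite vopp_rvs, rvs_z, vadd_0; auto. Qed.

Lemma vn_rev x y : vnorm X x <= vnorm X (vsub X x y) + vnorm X y.
Proof.
  pose proof (vn_tri_sub x y (vzero X)). rewrite !vsub_0 in H. auto.
Qed.

Lemma vn_rev' x y : vnorm X y - vnorm X (vsub X x y) <= vnorm X x.
Proof. pose proof (vn_rev y x). rewrite vsub_sym in H. lra. Qed.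

End XV.

Lemma HB_X k (X : NormedSpace (scalars k)) (y : X) : exists u : X -> R,
  (forall x x', u (vadd X x x') = u x + u x') /\ (forall r x, u (rvs _ X r x) = r * u x) /\
  (forall x, Rabs (u x) <= vnorm X x) /\ u y = vnorm X y.
Proof.
  eapply HB_real; intros;
  first [apply vadd_assoc | apply vadd_comm | apply vadd_0 | apply vadd_opp
  | apply rvs_assoc | apply rvs_1 | apply rvs_dv | apply rvs_ds | apply vnorm_triangle | apply rvs_p].
Qed.

Lemma dual_exists k (X : NormedSpace (scalars k)) (y : X) : exists phi : X -> scalars k,
  is_dual X phi /\ (forall x, sabs _ (phi x) <= vnorm X x) /\ phi y = emb k (vnorm X y).
Proof.
  destruct (HB_X _ X y) as [u [Hadd [Hhom [Hb Hy]]]].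
  destruct k.
  - exists u. split; [split; [|split]|split].
    + exact Hadd.
    + intros a x. apply (Hhom a x).
    + exists 1. intros x. simpl. rewrite Rmult_1_l; auto.
    + exact Hb.
    + exact Hy.
  - set (iX := fun x : X => vscal X ((0, 1) : scalars ComplexField) x).
    exists (fun x => ((u x, - u (iX x)) : scalars ComplexField)).
    assert (Hdec : forall a b x, vscal X ((a, b) : scalars ComplexField) x = vadd X (rvs _ X a x) (rvs _ X b (iX x))).
    { intros a b x. unfold rvs, iX. rewrite vscal_assoc, <- vscal_distr_s. f_equal.
      simpl. unfold Cmul, Cadd; simpl. apply pair_eq; ring. }
    assert (Hlin : forall a b x, u (vscal X ((a, b) : scalars ComplexField) x) = a * u x + b * u (iX x)).
    { intros. rewrite Hdec, Hadd, !Hhom; auto. }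
    assert (HiX : forall a b x, iX (vscal X ((a, b) : scalars ComplexField) x) = vscal X ((- b, a) : scalars ComplexField) x).
    { intros. unfold iX. rewrite vscal_assoc. f_equal. simpl. unfold Cmul; simpl. apply pair_eq; ring. }
    assert (Hlin2 : forall a x, (fun x => ((u x, - u (iX x)) : scalars ComplexField)) (vscal X a x) =
        smul _ a ((u x, - u (iX x)) : scalars ComplexField)).
    { intros [a b] x. simpl. rewrite HiX, !Hlin. unfold Cmul; simpl. apply pair_eq; ring. }
    assert (Hbound : forall x, Cabs (u x, - u (iX x)) <= vnorm X x).
    { intros x. set (al := u x). set (be := - u (iX x)). set (rho := Cabs (al, be)).
      assert (Hr2 : rho * rho = al * al + be * be).
      { unfold rho, Cabs; simpl. rewrite sqrt_sqrt by nra. ring. }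
      destruct (Req_dec rho 0) as [H0|H0]. rewrite H0. apply (vn_nonneg _ X).
      assert (Hrp : 0 < rho) by (pose proof (Cabs_nonneg (al, be)); fold rho in H; lra).
      set (w := ((al / rho, - be / rho) : scalars ComplexField)).
      pose proof (Hlin (al / rho) (- be / rho) x). fold al in H. unfold be in *.
      assert (u (vscal X w x) = rho).
      { unfold w. rewrite H. apply (Rmult_eq_reg_l rho); [|lra]. field_simplify; [|lra].
        replace (rho ^ 2) with (rho * rho) by ring. rewrite Hr2. ring. }
      pose proof (Hb (vscal X w x)). rewrite H1, vnorm_scal in H2.
      assert (sabs _ w = 1).
      { assert (E : (al/rho)^2 + (- - u (iX x) / rho)^2 = 1).
        { apply (Rmult_eq_reg_l (rho * rho)); [|nra]. field_simplify; [|lra].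
          replace (rho ^ 2) with (rho * rho) by ring. rewrite Hr2. ring. }
        unfold w. change (sqrt ((al/rho)^2 + (- - u (iX x) / rho)^2) = 1). rewrite E. apply sqrt_1. }
      rewrite H3, Rabs_pos_eq in H2; lra. }
    assert (HiXa : forall x x', iX (vadd X x x') = vadd X (iX x) (iX x')) by (intros; apply vscal_distr_v).
    clearbody iX.
    split; [split; [|split]|split].
    + intros x x'. rewrite HiXa, !Hadd. simpl. unfold Cadd; simpl. apply pair_eq; ring.
    + intros a x. apply Hlin2.
    + exists 1. intros x. simpl. rewrite Rmult_1_l. apply Hbound.
    + apply Hbound.
    + simpl. rewrite Hy. apply pair_eq; auto.
      pose proof (Hbound y). unfold Cabs in H; simpl in H. rewrite Hy in H.
      pose proof (vn_nonneg _ X y).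
      set (S := vnorm X y * (vnorm X y * 1) + - u (iX y) * (- u (iX y) * 1)) in *.
      assert (0 <= S) by (unfold S; nra).
      pose proof (sqrt_sqrt S H1). pose proof (sqrt_pos S).
      assert (sqrt S * sqrt S <= vnorm X y * vnorm X y) by (apply Rmult_le_compat; auto).
      assert (S <= vnorm X y * vnorm X y) by lra. unfold S in H5. nra.
Qed.


Lemma small_inv eps : eps > 0 -> exists N : nat, forall n, (n >= N)%nat -> / (INR n + 1) < eps.
Proof.
  intros He. destruct (archimed_cor1 eps He) as [N [H1 H2]]. exists N. intros n Hn.
  apply le_INR in Hn. apply lt_INR in H2. simpl in H2.
  eapply Rle_lt_trans; [|exact H1]. apply Rinv_le_contravar; lra.
Qed.

Lemma inv_pos n : 0 < / (INR n + 1).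
Proof. apply Rinv_0_lt_compat. pose proof (pos_INR n). lra. Qed.

Section Main.
Variable k : scalar_field.
Variable K : MetricSpace.
Variable X : NormedSpace (scalars k).

Notation S f := (@sup_norm (scalars k) K X f).
Notation nrm := (vnorm X).
Notation bnd f := (@fbounded (scalars k) K X f).

Definition Pf (f : K -> X) := fun r => r = 0 \/ exists t, r = nrm (f t).

Lemma sup_lub f : bnd f -> is_lub (Pf f) (S f).
Proof.
  intros [M HM]. unfold sup_norm.
  apply (epsilon_spec (inhabits 0) (is_lub (Pf f))).
  destruct (completeness (Pf f)) as [m Hm].
  - exists (Rmax M 0). intros r [->|[t ->]]. apply Rmax_r. eapply Rle_trans; [apply HM|apply Rmax_l].
  - exists 0; left; auto.
  - exists m; auto.
Qed.

Lemma sup_ge f t : bnd f -> nrm (f t) <= S f.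
Proof. intros H. apply (sup_lub f H). right; eauto. Qed.

Lemma sup_nonneg f : bnd f -> 0 <= S f.
Proof. intros H. apply (sup_lub f H). left; auto. Qed.

Lemma sup_le f b : (forall t, nrm (f t) <= b) -> 0 <= b -> S f <= b.
Proof.
  intros H Hb. apply (sup_lub f (ex_intro _ b H)). intros r [->|[t ->]]; auto.
Qed.

Lemma sup_approx f (t0 : K) eps : bnd f -> eps > 0 -> exists t, nrm (f t) > S f - eps.
Proof.
  intros Hf He. apply NNPP; intro Hn.
  assert (forall t, nrm (f t) <= S f - eps).
  { intros t. apply Rnot_lt_le. intro. apply Hn. exists t. lra. }
  assert (0 <= S f - eps) by (pose proof (H t0); pose proof (vn_nonneg _ X (f t0)); lra).
  pose proof (sup_le f _ H H0). lra.
Qed.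

Lemma sup_ext f g : (forall t, nrm (f t) = nrm (g t)) -> S f = S g.
Proof.
  intros H. unfold sup_norm.
  replace (fun r => r = 0 \/ exists t, r = nrm (f t)) with (fun r => r = 0 \/ exists t, r = nrm (g t)); auto.
  apply functional_extensionality; intro r. apply propositional_extensionality.
  split; intros [H1|[t H1]]; auto; right; exists t; rewrite H1; auto.
Qed.

Lemma fsub_sym f g : S (fsub f g) = S (fsub g f).
Proof. apply sup_ext. intros t. unfold fsub. apply vsub_sym. Qed.

Lemma bnd_sub f g : bnd f -> bnd g -> bnd (fsub f g).
Proof.
  intros [M HM] [N HN]. exists (M + N). intros t. unfold fsub, vsub.
  eapply Rle_trans; [apply vnorm_triangle|]. rewrite vn_opp. specialize (HM t); specialize (HN t); lra.
Qed.

Lemma bnd_add f g : bnd f -> bnd g -> bnd (fadd f g).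
Proof.
  intros [M HM] [N HN]. exists (M + N). intros t. unfold fadd.
  eapply Rle_trans; [apply vnorm_triangle|]. specialize (HM t); specialize (HN t); lra.
Qed.

Lemma sup_tri f g h : bnd f -> bnd g -> bnd h ->
  S (fsub f h) <= S (fsub f g) + S (fsub g h).
Proof.
  intros Hf Hg Hh. apply sup_le.
  - intros t. unfold fsub. eapply Rle_trans; [apply (vn_tri_sub _ X _ (g t))|].
    pose proof (sup_ge (fsub f g) t (bnd_sub _ _ Hf Hg)).
    pose proof (sup_ge (fsub g h) t (bnd_sub _ _ Hg Hh)). unfold fsub in *. lra.
  - pose proof (sup_nonneg _ (bnd_sub _ _ Hf Hg)). pose proof (sup_nonneg _ (bnd_sub _ _ Hg Hh)). lra.
Qed.

Lemma sup_diff f g : bnd f -> bnd g -> S f <= S (fsub f g) + S g.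
Proof.
  intros Hf Hg. apply sup_le.
  - intros t. eapply Rle_trans; [apply (vn_rev _ X _ (g t))|].
    pose proof (sup_ge (fsub f g) t (bnd_sub _ _ Hf Hg)). pose proof (sup_ge g t Hg). unfold fsub in *. lra.
  - pose proof (sup_nonneg _ (bnd_sub _ _ Hf Hg)). pose proof (sup_nonneg _ Hg). lra.
Qed.

Lemma nonzero_pos (x : X) : x <> vzero X -> 0 < nrm x.
Proof.
  intros H. pose proof (vn_nonneg _ X x). destruct (Req_dec (nrm x) 0) as [E|E].
  - apply vnorm_eq0 in E. contradiction.
  - lra.
Qed.

Lemma max_seq f (t0 : K) : bnd f -> exists u : nat -> K,
  Un_cv (fun n => nrm (f (u n))) (S f) /\ forall n, nrm (f (u n)) > S f - / (INR n + 1).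
Proof.
  intros Hf. destruct (choice (fun (n : nat) (t : K) => nrm (f t) > S f - / (INR n + 1))) as [u Hu].
  { intros n. apply (sup_approx f t0); auto. apply inv_pos. }
  exists u. split; auto. intros eps He. destruct (small_inv eps He) as [N HN]. exists N.
  intros n Hn. unfold R_dist. specialize (HN n Hn). specialize (Hu n). pose proof (sup_ge f (u n) Hf).
  rewrite Rabs_left1 by lra. lra.
Qed.

Lemma peak_max f t : strong_peak_at f t -> nrm (f t) = S f.
Proof.
  intros [[Hc Hb] [[s0 Hs0] Hp]].
  destruct (max_seq f s0 Hb) as [u [Hu1 Hu2]].
  specialize (Hp u Hu1).
  pose proof (sup_ge f t Hb).
  apply NNPP; intro Hne. set (d := S f - nrm (f t)). assert (Hd : d > 0) by (unfold d; lra).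
  destruct (Hc t (d / 2) ltac:(lra)) as [de [Hde Hcd]].
  destruct (Hp de Hde) as [N1 HN1]. destruct (small_inv (d/2) ltac:(lra)) as [N2 HN2].
  set (n := max N1 N2).
  specialize (HN1 n (Nat.le_max_l _ _)). specialize (HN2 n (Nat.le_max_r _ _)).
  specialize (Hcd (u n) HN1). specialize (Hu2 n).
  pose proof (vn_rev _ X (f (u n)) (f t)). unfold d in *. lra.
Qed.

Lemma peak_sep f t r : strong_peak_at f t -> r > 0 ->
  exists eta, eta > 0 /\ forall s, mdist K s t >= r -> nrm (f s) <= S f - eta.
Proof.
  intros Hpk Hr. pose proof Hpk as [[Hc Hb] [[s0 Hs0] Hp]].
  apply NNPP; intro Hn.
  assert (forall n : nat, exists s, mdist K s t >= r /\ nrm (f s) > S f - / (INR n + 1)).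
  { intros n. apply NNPP; intro Hm. apply Hn. exists (/ (INR n + 1)). split. apply inv_pos.
    intros s Hs. apply Rnot_lt_le. intro. apply Hm. exists s. split; [exact Hs | lra]. }
  destruct (choice _ H) as [u Hu].
  assert (Un_cv (fun n => nrm (f (u n))) (S f)).
  { intros eps He. destruct (small_inv eps He) as [N HM]. exists N.
    intros n Hn1. unfold R_dist. specialize (HM n Hn1). specialize (Hu n). pose proof (sup_ge f (u n) Hb).
    rewrite Rabs_left1 by lra. lra. }
  destruct (Hp u H0 r Hr) as [N HM]. specialize (HM N (le_n _)). specialize (Hu N). lra.
Qed.


Definition Uset (n : nat) (f : K -> X) : Prop := (exists s, f s <> vzero X) /\
  exists de, de > 0 /\ exists c : K, forall t, nrm (f t) > S f - de -> mdist K t c < / (INR n + 1).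

Lemma A_bnd (A : (K -> X) -> Prop) f : closed_subspace A -> A f -> bnd f.
Proof. intros HA Hf. apply (proj1 HA f Hf). Qed.

Lemma U_open (A : (K -> X) -> Prop) n : closed_subspace A -> open_in (Uset n) A.
Proof.
  intros HA f Hf [[s0 Hs0] [de [Hde [c Hc]]]].
  pose proof (nonzero_pos _ Hs0) as Hp.
  exists (Rmin (de / 3) (nrm (f s0))). split. apply Rmin_glb_lt; lra.
  intros g Hg Hgf.
  pose proof (Rmin_l (de/3) (nrm (f s0))). pose proof (Rmin_r (de/3) (nrm (f s0))).
  pose proof (A_bnd A f HA Hf) as Bf. pose proof (A_bnd A g HA Hg) as Bg.
  assert (Hpt : forall t, nrm (vsub X (g t) (f t)) < Rmin (de / 3) (nrm (f s0))).
  { intros t. eapply Rle_lt_trans; [|exact Hgf]. apply (sup_ge (fsub g f) t (bnd_sub _ _ Bg Bf)). }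
  split.
  - exists s0. intro E. specialize (Hpt s0). rewrite E in Hpt.
    pose proof (vn_rev _ X (f s0) (vzero X)). rewrite vn_zero, vsub_sym in H1. lra.
  - exists (de / 3). split. lra. exists c. intros t Ht. apply Hc.
    pose proof (sup_diff f g Bf Bg). rewrite fsub_sym in H1.
    pose proof (vn_rev' _ X (f t) (g t)). specialize (Hpt t). rewrite vsub_sym in Hpt. lra.
Qed.

Lemma peak_U f t n : strong_peak_at f t -> Uset n f.
Proof.
  intros Hpk. pose proof Hpk as [[Hc Hb] [Hnz Hp]]. split; auto.
  destruct (peak_sep f t (/ (INR n + 1)) Hpk (inv_pos n)) as [eta [He Hs]].
  exists eta. split; auto. exists t. intros s Hs'. apply Rnot_le_lt. intro. specialize (Hs s (Rle_ge _ _ H)). lra.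
Qed.

Lemma U_peak (A : (K -> X) -> Prop) f : complete_metric K -> closed_subspace A -> A f ->
  (forall n, Uset n f) -> strong_peak_fun f.
Proof.
  intros HK HA Hf HU. pose proof (A_bnd A f HA Hf) as Bf.
  destruct (HU 0%nat) as [[s0 Hs0] _].
  destruct (choice (fun n dc => fst dc > 0 /\ forall t, nrm (f t) > S f - fst dc -> mdist K t (snd dc) < / (INR n + 1)))
    as [dc Hdc].
  { intros n. destruct (HU n) as [_ [de [Hde [c Hc]]]]. exists (de, c); simpl; auto. }
  assert (Hcl : forall n m, mdist K (snd (dc n)) (snd (dc m)) < / (INR n + 1) + / (INR m + 1)).
  { intros n m. destruct (Hdc n) as [Hn1 Hn2]. destruct (Hdc m) as [Hm1 Hm2].
    destruct (sup_approx f s0 (Rmin (fst (dc n)) (fst (dc m))) Bf) as [t Ht].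
    apply Rmin_glb_lt; auto.
    pose proof (Rmin_l (fst (dc n)) (fst (dc m))). pose proof (Rmin_r (fst (dc n)) (fst (dc m))).
    assert (mdist K t (snd (dc n)) < / (INR n + 1)) by (apply Hn2; lra).
    assert (mdist K t (snd (dc m)) < / (INR m + 1)) by (apply Hm2; lra).
    pose proof (@Defs.dist_tri K (snd (dc n)) t (snd (dc m))). pose proof (@Defs.dist_sym K t (snd (dc n))). lra. }
  destruct (HK (fun n => snd (dc n))) as [t0 Ht0].
  { intros eps He. destruct (small_inv (eps / 2) ltac:(lra)) as [N HN]. exists N.
    intros n m Hn Hm. specialize (Hcl n m). pose proof (HN n Hn). pose proof (HN m Hm). lra. }
  exists t0. split; [apply (proj1 HA f Hf)|split; [exists s0; auto|]].
  intros u Hu eps He.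
  destruct (Ht0 (eps / 3) ltac:(lra)) as [M HM].
  destruct (small_inv (eps / 3) ltac:(lra)) as [M2 HM2].
  set (n := max M M2). specialize (HM n (Nat.le_max_l _ _)). specialize (HM2 n (Nat.le_max_r _ _)).
  destruct (Hdc n) as [Hn1 Hn2].
  destruct (Hu (fst (dc n)) Hn1) as [J HJ]. exists J. intros j Hj.
  specialize (HJ j Hj). unfold R_dist in HJ.
  assert (mdist K (u j) (snd (dc n)) < / (INR n + 1)).
  { apply Hn2. apply Rabs_def2 in HJ. lra. }
  simpl in HM. pose proof (@Defs.dist_tri K (u j) (snd (dc n)) t0). lra.
Qed.

Lemma dense_norming (A : (K -> X) -> Prop) : closed_subspace A ->
  dense_in (peak_funs A) A -> norming (rho A) A.
Proof.
  intros HA [_ HD] f Hf. pose proof (A_bnd A f HA Hf) as Bf. split.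
  - intros r [t [_ ->]]. apply sup_ge; auto.
  - intros b Hb. apply Rnot_lt_le. intro Hlt.
    set (eps := (S f - b) / 3).
    destruct (HD f Hf eps ltac:(unfold eps; lra)) as [g [[Hg [t0 Hpk]] Hfg]].
    pose proof (A_bnd A g HA Hg) as Bg.
    assert (rho A t0) by (exists g; split; auto; split; auto; apply peak_max; auto).
    assert (nrm (f t0) <= b) by (apply Hb; exists t0; auto).
    pose proof (peak_max g t0 Hpk).
    pose proof (sup_diff f g Bf Bg).
    pose proof (sup_ge (fsub f g) t0 (bnd_sub _ _ Bf Bg)). change (fsub f g t0) with (vsub X (f t0) (g t0)) in H3.
    pose proof (vn_rev' _ X (f t0) (g t0)). unfold eps in *. lra.
Qed.


Lemma le_eps a b : (forall e, e > 0 -> a < b + e) -> a <= b.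
Proof. intros H. apply Rnot_lt_le. intro. specialize (H ((a - b) / 2) ltac:(lra)). lra. Qed.

Lemma vsub_self (x : X) : nrm (vsub X x x) = 0.
Proof. unfold vsub. rewrite vadd_opp. apply vn_zero. Qed.

Lemma baire (A : (K -> X) -> Prop) (U : nat -> (K -> X) -> Prop) :
  Banach X -> closed_subspace A -> (forall n, open_in (U n) A) ->
  (forall n f, A f -> forall eps, eps > 0 -> exists g, A g /\ U n g /\ S (fsub f g) < eps) ->
  forall f, A f -> forall eps, eps > 0 -> exists F, A F /\ (forall n, U n F) /\ S (fsub f F) < eps.
Proof.
  intros HX HA HU HD f0 Hf0 eps0 Heps0.
  destruct (choice (fun (p : nat * ((K -> X) * R)) (q : (K -> X) * R) =>
    (A (fst (snd p)) /\ snd (snd p) > 0) -> A (fst q) /\ snd q > 0 /\ snd q <= snd (snd p) / 4 /\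
    S (fsub (fst (snd p)) (fst q)) < snd (snd p) / 2 /\
    forall h, A h -> S (fsub h (fst q)) <= 2 * snd q -> U (fst p) h)) as [st Hst].
  { intros [n [f r]]. simpl. destruct (classic (A f /\ r > 0)) as [[Hf Hr]|Hn].
    - destruct (HD n f Hf (r / 2) ltac:(lra)) as [g [Hg [HUg Hfg]]].
      destruct (HU n g Hg HUg) as [rh [Hrh Hop]].
      exists (g, Rmin (r / 4) (rh / 4)). simpl. intros _.
      pose proof (Rmin_l (r/4) (rh/4)). pose proof (Rmin_r (r/4) (rh/4)).
      split; auto. split. apply Rmin_glb_lt; lra. split; auto. split; auto.
      intros h Hh Hhg. apply Hop; auto. lra.
    - exists (f, r). intros; contradiction. }
  set (sq := fix sq n := match n with O => (f0, eps0 / 2) | Datatypes.S n' => st (n', sq n') end).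
  assert (Hsq : forall n, sq (Datatypes.S n) = st (n, sq n)) by reflexivity.
  set (fk := fun n => fst (sq n)). set (rk := fun n => snd (sq n)).
  assert (Hinv : forall n, A (fk n) /\ rk n > 0).
  { induction n. simpl. split; auto. unfold rk; simpl; lra.
    unfold fk, rk. rewrite Hsq. destruct (Hst (n, sq n) IHn) as [H1 [H2 _]]. auto. }
  assert (Hstep : forall n, rk (Datatypes.S n) <= rk n / 4 /\ S (fsub (fk n) (fk (Datatypes.S n))) < rk n / 2 /\
     forall h, A h -> S (fsub h (fk (Datatypes.S n))) <= 2 * rk (Datatypes.S n) -> U n h).
  { intros n. unfold fk, rk. rewrite Hsq. destruct (Hst (n, sq n) (Hinv n)) as [_ [_ [H1 [H2 H3]]]]. auto. }
  assert (Bk : forall n, bnd (fk n)) by (intros; apply (A_bnd A); auto; apply Hinv).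
  assert (P1 : forall n t, nrm (vsub X (fk n t) (fk (Datatypes.S n) t)) < rk n / 2).
  { intros n t. eapply Rle_lt_trans; [|apply (Hstep n)].
    apply (sup_ge (fsub (fk n) (fk (Datatypes.S n))) t (bnd_sub _ _ (Bk _) (Bk _))). }
  assert (P2 : forall m n t, nrm (vsub X (fk n t) (fk (n + m)%nat t)) <= 2 / 3 * rk n).
  { induction m; intros n t.
    - rewrite Nat.add_0_r, vsub_self. pose proof (Hinv n). lra.
    - rewrite <- plus_n_Sm. change (Datatypes.S (n + m)) with (Datatypes.S n + m)%nat.
      eapply Rle_trans; [apply (vn_tri_sub _ X _ (fk (Datatypes.S n) t))|].
      pose proof (P1 n t). pose proof (IHm (Datatypes.S n) t). pose proof (proj1 (Hstep n)). lra. }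
  assert (P3 : forall n, rk n * (INR n + 1) <= rk 0%nat).
  { induction n. simpl. lra. rewrite S_INR. pose proof (proj1 (Hstep n)). pose proof (Hinv n).
    pose proof (pos_INR n). nra. }
  assert (P3' : forall n, rk n <= rk 0%nat * / (INR n + 1)).
  { intros n. pose proof (P3 n). pose proof (pos_INR n).
    apply (Rmult_le_reg_r (INR n + 1)). lra. rewrite Rmult_assoc, Rinv_l; lra. }
  assert (Hr0 : rk 0%nat = eps0 / 2) by reflexivity.
  assert (Hsmall : forall e, e > 0 -> exists N, forall n, (n >= N)%nat -> rk n < e).
  { intros e He. destruct (small_inv (e / rk 0%nat)) as [N HN].
    apply Rlt_gt, Rdiv_lt_0_compat; lra.
    exists N. intros n Hn. specialize (HN n Hn). pose proof (P3' n).
    apply (Rmult_lt_compat_l (rk 0%nat)) in HN; [|lra].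
    replace (rk 0%nat * (e / rk 0%nat)) with e in HN by (field; lra). lra. }
  assert (Hcauchy : forall t, exists l, forall e, e > 0 -> exists N, forall n, (n >= N)%nat ->
      nrm (vsub X (fk n t) l) < e).
  { intros t. apply HX. intros e He. destruct (Hsmall e He) as [N HN]. exists N.
    intros n m Hn Hm. destruct (Nat.le_ge_cases n m) as [Hnm|Hnm].
    - replace m with (n + (m - n))%nat by lia. pose proof (P2 (m - n)%nat n t). pose proof (HN n Hn).
      pose proof (Hinv n). lra.
    - rewrite vsub_sym. replace n with (m + (n - m))%nat by lia. pose proof (P2 (n - m)%nat m t).
      pose proof (HN m Hm). pose proof (Hinv m). lra. }
  destruct (choice _ Hcauchy) as [F HF].
  assert (P4 : forall n t, nrm (vsub X (fk n t) (F t)) <= 2 / 3 * rk n).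
  { intros n t. apply le_eps. intros e He. destruct (HF t e He) as [N HN].
    set (j := max n N). specialize (HN j (Nat.le_max_r _ _)).
    pose proof (P2 (j - n)%nat n t). replace (n + (j - n))%nat with j in H by (unfold j; lia).
    pose proof (vn_tri_sub _ X (fk n t) (fk j t) (F t)). lra. }
  assert (HAF : A F).
  { destruct HA as [_ [_ [_ [_ Hlim]]]]. apply (Hlim fk); [intros; apply Hinv|].
    intros e He. destruct (Hsmall e He) as [N HN]. exists N. intros n t Hn.
    pose proof (P4 n t). pose proof (HN n Hn). pose proof (Hinv n). lra. }
  exists F. split; auto. split.
  - intros n. apply (Hstep n); auto. apply sup_le.
    + intros t. unfold fsub. rewrite vsub_sym. pose proof (P4 (Datatypes.S n) t). pose proof (Hinv (Datatypes.S n)). lra.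
    + pose proof (Hinv (Datatypes.S n)). lra.
  - eapply Rle_lt_trans. apply sup_le. intros t. unfold fsub. apply (P4 0%nat t).
    pose proof (Hinv 0%nat). lra. rewrite Hr0. lra.
Qed.


Lemma U_dense (A : (K -> X) -> Prop) n : closed_subspace A ->
  (forall (x : X) (phi : X -> scalars k) (f : K -> X) (m : nat),
      is_dual X phi -> A f -> (m >= 1)%nat ->
      A (fun t => vscal X (spow (phi (f t)) m) x)) ->
  norming (rho A) A ->
  forall f, A f -> forall eps, eps > 0 -> exists g, A g /\ Uset n g /\ S (fsub f g) < eps.
Proof.
  intros HA Hpoly Hnorm f Hf eps He. pose proof (A_bnd A f HA Hf) as Bf.
  set (c := eps / 2).
  assert (Hex : exists t0, rho A t0 /\ nrm (f t0) > S f - c / 4).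
  { apply NNPP; intro Hn. destruct (Hnorm f Hf) as [Hub Hl].
    assert (is_upper_bound (fun r => exists t, rho A t /\ r = nrm (f t)) (S f - c / 4)).
    { intros r [t [Ht ->]]. apply Rnot_lt_le; intro. apply Hn; exists t; split; auto; lra. }
    specialize (Hl _ H). unfold c in Hl. lra. }
  destruct Hex as [t0 [[g [Hg [Hpk Hgt0]]] Hft0]].
  pose proof (A_bnd A g HA Hg) as Bg.
  assert (HG : S g > 0).
  { destruct Hpk as [_ [[s Hs] _]]. pose proof (nonzero_pos _ Hs). pose proof (sup_ge g s Bg). lra. }
  set (G := S g) in *.
  destruct (dual_exists k X (g t0)) as [phi [Hd [Hphb Hphy]]].
  set (phi' := fun x => smul _ (emb k (/ G)) (phi x)).
  assert (Hd' : is_dual X phi').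
  { destruct Hd as [Ha [Hh [M HM]]]. split; [|split].
    - intros x y. unfold phi'. rewrite Ha, smul_add_r. auto.
    - intros a x. unfold phi'. rewrite Hh, smul_swap. auto.
    - exists (Rabs (/ G) * M). intros x. unfold phi'. rewrite sabs_mul, sabs_emb, Rmult_assoc.
      apply Rmult_le_compat_l. apply Rabs_pos. auto. }
  assert (Hp0 : phi' (g t0) = s1 _).
  { unfold phi'. rewrite Hphy, smul_emb, Hgt0, <- emb1. f_equal. field. lra. }
  assert (Hpb : forall t, sabs _ (phi' (g t)) <= / G * nrm (g t)).
  { intros t. unfold phi'. rewrite sabs_mul, sabs_emb, Rabs_pos_eq.
    apply Rmult_le_compat_l. left; apply Rinv_0_lt_compat; lra. auto. left; apply Rinv_0_lt_compat; lra. }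
  assert (Hpb1 : forall t, sabs _ (phi' (g t)) <= 1).
  { intros t. eapply Rle_trans; [apply Hpb|]. pose proof (sup_ge g t Bg). fold G in H.
    apply (Rmult_le_reg_l G); auto. rewrite <- Rmult_assoc, Rinv_r; lra. }
  destruct (peak_sep g t0 (/ (INR n + 1)) Hpk (inv_pos n)) as [eta [Heta Hsep]]. fold G in Hsep.
  pose proof (Rmin_l eta G). pose proof (Rmin_r eta G). set (eta' := Rmin eta G) in *.
  assert (Heta' : eta' > 0) by (apply Rmin_glb_lt; lra).
  set (th := 1 - eta' / G).
  assert (Hth : 0 <= th < 1).
  { unfold th. split. apply (Rmult_le_reg_l G); auto. field_simplify; [|lra]. lra.
    assert (eta' / G > 0) by (apply Rdiv_lt_0_compat; lra). lra. }
  assert (Hfar : forall s, mdist K s t0 >= / (INR n + 1) -> sabs _ (phi' (g s)) <= th).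
  { intros s Hs. eapply Rle_trans; [apply Hpb|]. specialize (Hsep s Hs).
    apply (Rmult_le_reg_l G); auto. rewrite <- Rmult_assoc, Rinv_r by lra. unfold th.
    field_simplify; [|lra]. lra. }
  destruct (pow_lt_1_zero th ltac:(rewrite Rabs_pos_eq; lra) (1 / 4) ltac:(lra)) as [N HN].
  set (m := Datatypes.S N).
  assert (Hm : Rabs (th ^ m) < 1 / 4) by (apply HN; unfold m; lia).
  rewrite Rabs_pos_eq in Hm by (apply pow_le; lra).
  assert (Hw : exists w, nrm w = c /\ nrm (vadd X (f t0) w) > S f + 3 * c / 4).
  { destruct (classic (f t0 = vzero X)) as [Hz|Hz].
    - exists (rvs _ X (c / G) (g t0)). rewrite Hz in *. rewrite vn_zero in Hft0.
      assert (nrm (rvs _ X (c / G) (g t0)) = c).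
      { rewrite rvs_p, Hgt0, Rabs_pos_eq. fold G. field. lra. left; apply Rdiv_lt_0_compat; unfold c; lra. }
      split; auto. rewrite vadd_0l, H1. lra.
    - pose proof (nonzero_pos _ Hz) as Hfp. set (a := nrm (f t0)) in *.
      exists (rvs _ X (c / a) (f t0)). split.
      + rewrite rvs_p, Rabs_pos_eq. fold a. field. lra. left; apply Rdiv_lt_0_compat; unfold c; lra.
      + assert (E : vadd X (f t0) (rvs _ X (c / a) (f t0)) = rvs _ X (1 + c / a) (f t0)).
        { rewrite rvs_ds, rvs_1. auto. }
        rewrite E, rvs_p, Rabs_pos_eq. fold a. field_simplify; [|lra]. lra.
        assert (c / a > 0) by (apply Rdiv_lt_0_compat; unfold c; lra). lra. }
  destruct Hw as [w [Hw1 Hw2]].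
  set (p := fun t => vscal X (spow (phi' (g t)) m) w).
  assert (HAp : A p) by (apply Hpoly; auto; unfold m; lia).
  set (h := fadd f p).
  assert (HAh : A h) by (apply (proj1 (proj2 (proj2 HA))); auto).
  pose proof (A_bnd A h HA HAh) as Bh.
  assert (Hpn : forall t, nrm (p t) = sabs _ (phi' (g t)) ^ m * c).
  { intros t. unfold p. rewrite vnorm_scal, sabs_spow, Hw1. auto. }
  assert (Hp1 : forall t, nrm (p t) <= c).
  { intros t. rewrite Hpn. pose proof (pow_incr (sabs _ (phi' (g t))) 1 m (conj (sabs_nonneg _ _) (Hpb1 t))).
    rewrite pow1 in H1. unfold c in *. nra. }
  assert (Hpfar : forall t, mdist K t t0 >= / (INR n + 1) -> nrm (p t) < c / 4).
  { intros t Ht. rewrite Hpn. pose proof (pow_incr (sabs _ (phi' (g t))) th m (conj (sabs_nonneg _ _) (Hfar t Ht))).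
    unfold c in *. nra. }
  assert (Hpt0 : p t0 = w) by (unfold p; rewrite Hp0, spow_s1, vscal_1; auto).
  assert (Hht0 : nrm (h t0) > S f + 3 * c / 4) by (unfold h, fadd; rewrite Hpt0; auto).
  pose proof (sup_nonneg f Bf).
  exists h. split; auto. split.
  - split.
    + exists t0. intro E. rewrite E, vn_zero in Hht0. unfold c in *. lra.
    + exists (c / 2). split. unfold c; lra. exists t0. intros t Ht.
      pose proof (sup_ge h t0 Bh). apply Rnot_le_lt. intro Hf'.
      pose proof (Hpfar t (Rle_ge _ _ Hf')). pose proof (sup_ge f t Bf).
      assert (nrm (h t) <= nrm (f t) + nrm (p t)) by apply vnorm_triangle. lra.
  - eapply Rle_lt_trans. apply sup_le. intros t. unfold fsub, h, fadd. rewrite vsub_add, vn_opp. apply Hp1.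
    unfold c; lra. unfold c; lra.
Qed.

End Main.

Theorem theorem2p1 (k : scalar_field) (K : MetricSpace)
  (X : NormedSpace (scalars k)) (A : (K -> X) -> Prop) :
  complete_metric K ->
  Banach X ->
  closed_subspace A ->
  (forall (x : X) (phi : X -> scalars k) (f : K -> X) (m : nat),
      is_dual X phi -> A f -> (m >= 1)%nat ->
      A (fun t => vscal X (spow (phi (f t)) m) x)) ->
  (norming (rho A) A <-> (dense_in (peak_funs A) A /\ Gdelta_in (peak_funs A) A)).
Proof.
  intros HK HX HA Hpoly. split.
  - intros Hn.
    assert (HD : dense_in (peak_funs A) A).
    { split. intros f [Hf _]; auto.
      intros f Hf eps He.
      destruct (baire k K X A (Uset k K X) HX HA (fun n => U_open k K X A n HA)
        (fun n => U_dense k K X A n HA Hpoly Hn) f Hf eps He) as [F [HF [HU HFe]]].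
      exists F. split; auto. split; auto. apply (U_peak k K X A F HK HA HF HU). }
    split; auto. split. intros f [Hf _]; auto.
    exists (Uset k K X). split. intros n; apply U_open; auto.
    intros f Hf; split.
    + intros [_ [t Hpk]] n. apply (peak_U k K X f t n Hpk).
    + intros HU. split; auto. apply (U_peak k K X A f HK HA Hf HU).
  - intros [HD _]. apply dense_norming; auto.
Qed.
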